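(* Let $G(q)$ be a finite Chevalley group over $\mathbb{F}_q$ and let $P\subset G(q)$ be a proper parabolic subgroup. Then for any nonempty set $A\subseteq G(q)$ one has either $$|AP|\,|A\cap P| \ge 2^{-1}|A|^2 \quad\text{or}\quad |AP|\,|PA|\ge 2^{-2}|A||P|q.$$ In particular, $$\max\{|AP|,|PA|\}\ge 2^{-1}\min\{|A|^2|A\cap P|^{-1},\,(|A||P|q)^{1/2}\}$$ (with $|A|^2|A\cap P|^{-1}=+\infty$ when $A\cap P=\emptyset$). Similarly, $$|APA|\ge \frac{|P|}{4}\cdot\min\{q,\; |A|^4\sigma_P(A^{-1},A)^{-1}\sigma_P(A,A^{-1})^{-1}\}.$$ Moreover, if $B\subseteq P$ is a Borel subgroup with $P=BW_JB$ and $A\not\subseteq P$, then $|PAB|\ge q|P|$.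
   Context: $G(q)$ is a (possibly twisted) finite Chevalley group over the finite field $\mathbb{F}_q$ with its BN-pair structure (Borel subgroup $B$, Weyl group $W$); a parabolic subgroup is a subgroup containing a Borel subgroup, equivalently a conjugate of some $P_J=BW_JB$ where $W_J$ is the subgroup of $W$ generated by a subset $J$ of the fundamental reflections. For sets $X,Y$ in a group, $XY=\{xy\}$, $X^{-1}=\{x^{-1}\}$, $r_{XY}(z)$ is the number of pairs $(x,y)\in X\times Y$ with $xy=z$, and for a set $S$, $\sigma_S(X,Y)=\sum_{z\in S} r_{XY}(z)$. *)

(* Defs.v *)
From mathcomp Require Import all_boot all_order all_algebra all_fingroup.
Set Implicit Arguments. Unset Strict Implicit. Unset Printing Implicit Defensive.
Import GRing.Theory Num.Theory.

Local Open Scope group_scope.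

Definition rXY (gT : finGroupType) (X Y : {set gT}) (z : gT) : nat :=
  #|[set p : gT * gT | (p.1 \in X) && (p.2 \in Y) && (p.1 * p.2 == z)]|.

Definition sigmaS (gT : finGroupType) (S X Y : {set gT}) : nat :=
  (\sum_(z in S) rXY X Y z)%N.

(* (B,N) is a BN-pair (Tits system) of G, with T = B :&: N and the
   distinguished generators of W = N/T represented by the set S of
   elements of N (an element s of S stands for the coset sT). *)
Definition is_BN_pair (gT : finGroupType) (G B N : {group gT}) (S : {set gT}) : Prop :=
  [/\ G :=: <<B :|: N>>,
      (B :&: N) <| N,
      [/\ S \subset N,
          {in S, forall s, s \notin B :&: N /\ s * s \in B :&: N}
        & N :=: <<S :|: (B :&: N)>>],
      (forall s n, s \in S -> n \in N ->
          ((s *: B :* n) \subset ((B :* n * B) :|: (B :* (s * n) * B))))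
    & {in S, forall s, B :^ s != B}].

(* The BN-pair has all rank-one parameters at least q: |BsB| >= q|B|.
   (This is what "over F_q" provides for (twisted) Chevalley groups.) *)
Definition BN_params_ge (gT : finGroupType) (B : {set gT}) (S : {set gT}) (q : nat) : Prop :=
  {in S, forall s, (q * #|B| <= #|(B :* s * B)%g|)%N}.

(* preimage in N of W_J = <J> for J a subset of S *)
Definition WJ (gT : finGroupType) (B N : {set gT}) (J : {set gT}) : {set gT} :=
  <<J :|: (B :&: N)>>.

Definition PJ (gT : finGroupType) (B N : {set gT}) (J : {set gT}) : {set gT} :=
  B * WJ B N J * B.

Definition parabolic (gT : finGroupType) (G B P : {set gT}) : Prop :=
  P \subset G /\ exists2 g, g \in G & B :^ g \subset P.

(* Main.v *)
Require Import Defs.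
From mathcomp Require Import all_boot all_order all_algebra all_fingroup.
From mathcomp Require Import zify ring lra.
Import GRing.Theory Num.Theory.
Set Implicit Arguments. Unset Strict Implicit. Unset Printing Implicit Defensive.

Lemma fiber_sum (T1 T2 : finType) (E : {set T1}) (Y : {set T2}) (f : T1 -> T2) :
  (forall p, p \in E -> f p \in Y) ->
  #|E| = \sum_(z in Y) #|[set p in E | f p == z]|.
Proof.
move=> hf; rewrite -sum1_card (partition_big f (mem Y)) //=.
by apply: eq_bigr => z _; rewrite -sum1_card; apply: eq_bigl => p; rewrite inE.
Qed.

Lemma fiber_le_w (T1 T2 : finType) (E : {set T1}) (Y : {set T2}) (f : T1 -> T2)
  (M : T2 -> nat) (c : nat) :
  (forall p, p \in E -> f p \in Y) ->
  (forall z, z \in Y -> c * #|[set p in E | f p == z]| <= M z) ->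
  c * #|E| <= \sum_(z in Y) M z.
Proof.
move=> hf hM; rewrite (fiber_sum hf) big_distrr /=; exact: leq_sum.
Qed.

Lemma two_mul_le (x y : nat) : 2 * x * y <= x * x + y * y.
Proof.
case: (leqP x y) => h; [move: (subnK h) | move: (subnK (ltnW h))]; move: (_ - _) => d <-; nia.
Qed.

Lemma CSn (T1 : finType) (Y : {set T1}) (f : T1 -> nat) :
  (\sum_(z in Y) f z) ^ 2 <= #|Y| * \sum_(z in Y) f z ^ 2.
Proof.
have e1 : (\sum_(z in Y) f z) ^ 2 = \sum_(i in Y) \sum_(j in Y) f i * f j.
  by rewrite -mulnn big_distrl; apply: eq_bigr => i _; rewrite big_distrr.
have e2 : \sum_(i in Y) \sum_(j in Y) (f i * f i + f j * f j) = 2 * (#|Y| * \sum_(z in Y) f z ^ 2).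
  under eq_bigr => i _ do rewrite big_split /= sum_nat_const.
  rewrite big_split /= -big_distrr /= sum_nat_const mul2n -addnn.
  by congr (_ + _); congr (_ * _); apply: eq_bigr => i _; rewrite mulnn.
rewrite -(leq_pmul2l (isT : 0 < 2)) -e2 e1 big_distrr /=.
apply: leq_sum => i _; rewrite big_distrr /=; apply: leq_sum => j _.
by rewrite mulnA two_mul_le.
Qed.

Lemma sum_setX_mul (T1 T2 : finType) (X1 : {set T1}) (X2 : {set T2}) (g1 : T1 -> nat) (g2 : T2 -> nat) :
  \sum_(z in setX X1 X2) (g1 z.1 * g2 z.2) = (\sum_(x in X1) g1 x) * (\sum_(y in X2) g2 y).
Proof.
rewrite big_distrl /=.
under [RHS]eq_bigr => x _ do rewrite big_distrr /=.
rewrite pair_big /=; apply: eq_bigl => z; by rewrite !inE.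
Qed.

Lemma sum_bool_card (T1 : finType) (X : {set T1}) (c : pred T1) :
  \sum_(x in X) (c x : nat) = #|[set x in X | c x]|.
Proof.
rewrite -sum1_card big_mkcond [RHS]big_mkcond /=; apply: eq_bigr => x _.
by rewrite inE; case: (x \in X); case: (c x).
Qed.

Lemma sigmaS_card (gT : finGroupType) (P X Y : {set gT}) :
  sigmaS P X Y = #|[set p : gT * gT | (p.1 \in X) && (p.2 \in Y) && (p.1 * p.2 \in P)%g]|.
Proof.
rewrite (@fiber_sum _ _ _ P (fun p : gT * gT => (p.1 * p.2 : gT)%g)).
  rewrite /sigmaS /rXY; apply: eq_bigr => z hz; apply: eq_card => p; rewrite !inE.
  case e: (p.1 * p.2 == z)%g; last by rewrite !andbF.
  by move/eqP: e => e; rewrite !andbT -andbA; congr (_ && _); rewrite e hz andbT.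
by move=> p; rewrite inE => /andP [_ ->].
Qed.

Lemma fiber_le (T1 T2 : finType) (E : {set T1}) (Y : {set T2}) (f : T1 -> T2) (M : nat) :
  (forall p, p \in E -> f p \in Y) ->
  (forall z, z \in Y -> #|[set p in E | f p == z]| <= M) ->
  #|E| <= #|Y| * M.
Proof.
move=> hf hM; rewrite (fiber_sum hf) -sum_nat_const; exact: leq_sum.
Qed.

Section Comb.
Local Open Scope group_scope.
Variables (gT : finGroupType) (G P : {group gT}) (q : nat).
Hypotheses (hPG : P \subset G)
  (hK : forall w, w \in G -> w \notin P -> q * #|w *: P :&: P :* w| <= #|P|).
Implicit Types (x y z s t b n w m a g u v c : gT).

Lemma claim1_nat (A : {set gT}) : A \subset G ->
  q * #|A :\: P| * #|P| <= #|A * P| * #|P * A|.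
Proof.
move=> hAG.
pose E := setX (setX (A :\: P) P) P.
pose f := fun t : (gT * gT) * gT => ((t.1.1 * t.1.2 : gT), (t.2 * t.1.1 : gT)).
pose Y := setX (A * P) (P * A).
have h : q * #|E| <= \sum_(z in Y) #|P|.
  apply: (@fiber_le_w _ _ E Y f).
    move=> [[a p] p']; rewrite !inE /= => /andP [/andP [/andP [haP ha] hp] hp'].
    by rewrite !mem_mulg.
  move=> z hz.
  pose F := [set t in E | f t == z].
  change (q * #|F| <= #|P|).
  case: (set_0Vmem F) => [->|[t0 ht0]]; first by rewrite cards0 muln0.
  move: ht0; case: t0 => [[a0 p0] p0']; rewrite !inE /=.
  case/andP => /andP [/andP [/andP [ha0P ha0] hp0] hp0'] /eqP ez0.
  have hinj : {in F &, injective (fun t : (gT * gT) * gT => t.1.1)}.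
    move=> [[a p] p'] [[a1 r] r']; rewrite !inE /= => /andP [_ /eqP e1] /andP [_ /eqP e2] ea.
    subst a1; move: e1; rewrite -e2 => [[]] /mulgI -> /mulIg -> //.
  rewrite -(card_in_imset hinj).
  apply: leq_trans (hK (subsetP hAG _ ha0) ha0P); rewrite leq_mul2l; apply/orP; right.
  apply: subset_leq_card; apply/subsetP => x /imsetP [[[a p] p'] ht ->] /=.
  move: ht; rewrite !inE /= => /andP [/andP [/andP [_ hp] hp'] /eqP e].
  rewrite -ez0 in e; case: e => e1 e2.
  have {}e1 : a * p = a0 * p0 := e1.
  have {}e2 : p' * a = p0' * a0 := e2.
  rewrite mem_lcoset mem_rcoset.
  have -> : a0^-1 * a = p0 * p^-1 by apply: (canRL (mulgK p)); rewrite -mulgA e1 mulKg.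
  have -> : a * a0^-1 = p'^-1 * p0' by rewrite -[a](mulKg p') e2 mulgA mulgK.
  by apply/andP; split; apply: groupM => //; rewrite groupV.
move: h; rewrite sum_nat_const /E /Y !cardsX.
have hP : 0 < #|P| by rewrite cardG_gt0.
by move=> h; rewrite -(leq_pmul2r hP); rewrite !mulnA in h *.
Qed.

Lemma C_bound u v : u \in G ->
  (q * #|[set p in P | (u * p * v)%g \in P]| <= q * #|P| * ((u \in P) * (v \in P)) + #|P|)%N.
Proof.
move=> huG; set C := [set p in P | u * p * v \in P].
case hu: (u \in P).
  case hv: (v \in P).
    rewrite /= muln1; apply: leq_trans (leq_addr _ _); rewrite muln1 leq_mul2l; apply/orP; right.
    by apply: subset_leq_card; apply/subsetP => p; rewrite inE => /andP [].
  suff -> : C = set0 by rewrite cards0 muln0.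
  apply/setP => p; rewrite !inE; apply/negP => /andP [hp h].
  have : v \in P.
    have -> : v = (u * p)^-1 * (u * p * v) by rewrite mulKg.
    by rewrite groupM // groupV groupM.
  by rewrite hv.
rewrite mul0n muln0 add0n.
case: (set_0Vmem C) => [->|[p0 hp0]]; first by rewrite cards0 muln0.
move: (hp0); rewrite inE => /andP [hp0P hp0v].
set w := u * p0.
have hwG : w \in G by rewrite groupM // (subsetP hPG).
have hwP : w \notin P.
  apply/negP => h; have : u \in P.
    have -> : u = w * p0^-1 by rewrite mulgK.
    by rewrite groupM // groupV.
  by rewrite hu.
apply: leq_trans (hK hwG hwP); rewrite leq_mul2l; apply/orP; right.
rewrite -(card_imset _ (@mulgI _ u)); apply: subset_leq_card.
apply/subsetP => y /imsetP [p]; rewrite inE => /andP [hp hpv] ->.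
rewrite inE mem_lcoset mem_rcoset; apply/andP; split.
  by rewrite /w invMg -mulgA (mulgA u^-1) mulVg mul1g groupM // groupV.
have -> : u * p * w^-1 = (u * p * v) * (u * p0 * v)^-1.
  by rewrite /w !invMg !mulgA mulgK.
by rewrite groupM // groupV.
Qed.

Lemma E1_le (A : {set gT}) :
  (\sum_(x in setX A A) ((x.2^-1 * x.1)%g \in P) <= sigmaS P A^-1 A)%N.
Proof.
rewrite sum_bool_card sigmaS_card.
pose h := fun x : gT * gT => (x.2^-1, x.1).
have hinj : injective h by move=> [a a'] [b b'] [] /invg_inj -> ->.
rewrite -(card_imset _ hinj); apply: subset_leq_card; apply/subsetP => y.
case/imsetP => [[a a']]; rewrite !inE /= => /andP [/andP [ha ha'] hP] ->.
by rewrite /h /= invgK ha' ha.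
Qed.

Lemma E2_le (A : {set gT}) :
  (\sum_(x in setX A A) ((x.1 * x.2^-1)%g \in P) <= sigmaS P A A^-1)%N.
Proof.
rewrite sum_bool_card sigmaS_card.
pose h := fun x : gT * gT => (x.1, x.2^-1).
have hinj : injective h by move=> [a a'] [b b'] [] -> /invg_inj ->.
rewrite -(card_imset _ hinj); apply: subset_leq_card; apply/subsetP => y.
case/imsetP => [[a a']]; rewrite !inE /= => /andP [/andP [ha ha'] hP] ->.
by rewrite /h /= invgK ha' ha.
Qed.

Lemma claim3_nat (A : {set gT}) : A \subset G ->
  (q * #|A| ^ 4 * #|P| <= #|(A * P * A)%g| * (q * (sigmaS P A^-1 A * sigmaS P A A^-1) + #|A| ^ 4))%N.
Proof.
move=> hAG; have hAGe := subsetP hAG; have hPGe := subsetP hPG.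
pose F := setX (setX A P) A.
pose f := fun t : (gT * gT) * gT => (t.1.1 * t.1.2 * t.2 : gT).
pose Y : {set gT} := A * P * A.
have hfY : forall tr : (gT * gT) * gT, tr \in F -> f tr \in Y.
  move=> [[a p] b]; rewrite !inE /= => /andP [/andP [ha hp] hb].
  by rewrite /f /= !mem_mulg.
pose fib := fun z => #|[set tr in F | f tr == z]|.
have S1 : #|F| = (\sum_(z in Y) fib z)%N := fiber_sum hfY.
pose Q := [set tt in setX F F | f tt.1 == f tt.2].
have S2 : #|Q| = (\sum_(z in Y) fib z ^ 2)%N.
  rewrite (@fiber_sum _ _ Q Y (fun tt => f tt.1)).
    apply: eq_bigr => z hz; rewrite /fib -mulnn -cardsX; apply: eq_card => -[t1 t2].
    rewrite !inE /=; case e1: (f t1 == z); first last.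
      by rewrite !(andbF, andFb).
    move/eqP: e1 => ->; rewrite !andbT eq_sym.
    by case: (f t2 == z); rewrite ?andbT ?andbF.
  move=> [t1 t2]; rewrite inE => /andP [h _]; move: h; rewrite in_setX => /andP [h1 _]; exact: hfY.
have CS := CSn Y fib.
pose Z := setX (setX A A) (setX A A).
pose g := fun tt : ((gT * gT) * gT) * ((gT * gT) * gT) =>
  ((tt.1.1.1, tt.2.1.1), (tt.1.2, tt.2.2)).
pose M := fun z : (gT * gT) * (gT * gT) =>
  (q * #|P| * (((z.1.2^-1 * z.1.1)%g \in P) * ((z.2.1 * z.2.2^-1)%g \in P)) + #|P|)%N.
have S4 : (q * #|Q| <= \sum_(z in Z) M z)%N.
  apply: (@fiber_le_w _ _ Q Z g M q).
    move=> [[[a p] b] [[a' p'] b']]; rewrite !inE /=.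
    by case/andP => /andP [/andP [/andP [-> _] ->] /andP [/andP [-> _] ->]].
  move=> [[a a'] [b b']]; rewrite !inE /= => /andP [/andP [ha ha'] /andP [hb hb']].
  set Fq := [set tt in Q | g tt == ((a, a'), (b, b'))].
  have hinj : {in Fq &, injective (fun tt : ((gT * gT) * gT) * ((gT * gT) * gT) => tt.1.1.2)}.
    move=> [[[a1 p1] b1] [[a1' p1'] b1']] [[[a2 p2] b2] [[a2' p2'] b2']].
    rewrite !inE /= => /andP [/andP [_ /eqP e1] /eqP [x1 x2 x3 x4]].
    move=> /andP [/andP [_ /eqP e2] /eqP [y1 y2 y3 y4]] ep; subst a1 a1' b1 b1' a2 a2' b2 b2' p2.
    have {}e1 : a * p1 * b = a' * p1' * b' := e1.
    have {}e2 : a * p1 * b = a' * p2' * b' := e2.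
    by rewrite e1 in e2; move/mulIg/mulgI: e2 => ->.
  rewrite -(card_in_imset hinj); apply: leq_trans (C_bound (b * b'^-1) _); last first.
    by rewrite groupM ?groupV ?hAGe.
  rewrite leq_mul2l; apply/orP; right; apply: subset_leq_card.
  apply/subsetP => x /imsetP [[[[a1 p1] b1] [[a1' p1'] b1']]].
  rewrite !inE /= => /andP [/andP [/andP [/andP [/andP [_ hp1] _] /andP [/andP [_ hp1'] _]] /eqP e1] /eqP [e3 e4 e5 e6]] ->.
  subst a1 a1' b1 b1'.
  have {}e1 : a * p1 * b = a' * p1' * b' := e1.
  rewrite hp1 /=.
  have -> : a'^-1 * a * p1 * (b * b'^-1) = p1'.
    transitivity (a'^-1 * (a * p1 * b) * b'^-1); first by rewrite !mulgA.
    by rewrite e1 !mulgA mulVg mul1g mulgK.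
  exact: hp1'.
set E1 := sigmaS P A^-1 A; set E2 := sigmaS P A A^-1.
have S5 : (\sum_(z in Z) M z <= q * #|P| * (E1 * E2) + #|A| ^ 4 * #|P|)%N.
  rewrite big_split /= -big_distrr /= sum_nat_const /Z !cardsX.
  rewrite (@sum_setX_mul _ _ (setX A A) (setX A A)
    (fun x : gT * gT => ((x.2^-1 * x.1)%g \in P) : nat)
    (fun y : gT * gT => ((y.1 * y.2^-1)%g \in P) : nat)).
  apply: leq_add; last by rewrite eq_leq //; ring.
  rewrite leq_mul2l; apply/orP; right; apply: leq_mul; [exact: E1_le | exact: E2_le].
have hP : 0 < #|P| by rewrite cardG_gt0.
have hF : #|F| = (#|A| * #|P| * #|A|)%N by rewrite /F !cardsX.
have h1 : (#|F| ^ 2 <= #|Y| * #|Q|)%N by rewrite S1 S2.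
have h2 : (q * #|F| ^ 2 <= #|Y| * (q * #|P| * (E1 * E2) + #|A| ^ 4 * #|P|))%N.
  apply: leq_trans (_ : (q * (#|Y| * #|Q|) <= _)%N).
    by rewrite leq_mul2l h1 orbT.
  rewrite mulnCA leq_mul2l; apply/orP; right; exact: leq_trans S4 S5.
rewrite -(leq_pmul2r hP).
have -> : (q * #|A| ^ 4 * #|P| * #|P| = q * #|F| ^ 2)%N by rewrite hF; ring.
apply: leq_trans h2 _; rewrite eq_leq //; ring.
Qed.

Lemma claim1 (A : {set gT}) : A \subset G ->
  (#|A| ^ 2 <= 2 * (#|(A * P)%g| * #|A :&: P|) \/ #|A| * #|P| * q <= 4 * (#|(A * P)%g| * #|(P * A)%g|))%N.
Proof.
move=> hAG; have h := claim1_nat hAG; have hc : (#|A :&: P| + #|A :\: P| = #|A|)%N := cardsID P A.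
have hAP : (#|A| <= #|(A * P)%g|)%N by apply: subset_leq_card; apply: mulg_subl; apply: group1.
case: (leqP #|A| (2 * #|A :&: P|)%N) => hi.
  left; rewrite -mulnn mulnCA; exact: leq_mul hAP hi.
right.
have h2 : (#|A| <= 2 * #|A :\: P|)%N by lia.
have h3 : (#|A| * (#|P| * q) <= (2 * #|A :\: P|) * (#|P| * q))%N by apply: leq_mul.
have e1 : (#|A| * #|P| * q = #|A| * (#|P| * q))%N by ring.
have e2 : ((2 * #|A :\: P|) * (#|P| * q) = 2 * (q * #|A :\: P| * #|P|))%N by ring.
rewrite e1; apply: leq_trans h3 _; rewrite e2; lia.
Qed.

Lemma sigma_pos (A : {set gT}) : A != set0 ->
  (0 < sigmaS P A^-1 A)%N /\ (0 < sigmaS P A A^-1)%N.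
Proof.
case/set0Pn => a ha; rewrite !sigmaS_card; split; apply/card_gt0P.
  by exists (a^-1, a); rewrite !inE /= invgK ha mulVg group1.
by exists (a, a^-1); rewrite !inE /= invgK ha mulgV group1.
Qed.
End Comb.

Section BN.
Local Open Scope group_scope.
Variables (gT : finGroupType) (G B N : {group gT}) (S : {set gT}).
Hypothesis hBN : is_BN_pair G B N S.
Implicit Types (x y z s t b n w m a g u v c : gT).

Definition T := (B :&: N)%G.

Lemma hG : G :=: <<B :|: N>>. Proof. by case: hBN. Qed.
Lemma hTN : T <| N. Proof. by case: hBN. Qed.
Lemma hSN : S \subset N. Proof. by case: hBN => _ _ []. Qed.
Lemma hS s : s \in S -> s \notin T /\ s * s \in T.
Proof. by case: hBN => _ _ [_ H _] _ _; apply: H. Qed.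
Lemma hNgen : N :=: <<S :|: T>>. Proof. by case: hBN => _ _ []. Qed.
Lemma hBN4 s n : s \in S -> n \in N ->
  s *: B :* n \subset (B :* n * B) :|: (B :* (s * n) * B).
Proof. by case: hBN => _ _ _ H _; apply: H. Qed.

Lemma TB : T \subset B. Proof. exact: subsetIl. Qed.
Lemma TN : T \subset N. Proof. exact: subsetIr. Qed.
Lemma memTB t : t \in T -> t \in B. Proof. exact: (subsetP TB). Qed.
Lemma memTN t : t \in T -> t \in N. Proof. exact: (subsetP TN). Qed.
Lemma memSN s : s \in S -> s \in N. Proof. exact: (subsetP hSN). Qed.
Lemma memBT t : t \in B -> t \in N -> t \in T. Proof. by move=> h1 h2; rewrite inE h1. Qed.

Lemma TJ t n : t \in T -> n \in N -> t ^ n \in T.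
Proof.
move=> ht hn; rewrite memJ_norm //; exact: (subsetP (normal_norm hTN)).
Qed.

Lemma mulsP (A C : {set gT}) z : z \in A * C -> exists a : gT, exists c : gT, [/\ a \in A, c \in C & z = a * c].
Proof. by case/mulsgP => a c ha hc ->; exists a, c. Qed.

Definition dc (x : gT) := B :* x * B.

Lemma dcP x z : reflect (exists b1 : gT, exists b2 : gT, [/\ b1 \in B, b2 \in B & z = b1 * x * b2]) (z \in dc x).
Proof.
apply: (iffP idP).
  case/mulsgP => y b2 hy hb2 ->; move: hy; rewrite mem_rcoset => hy.
  exists (y * x^-1), b2; split => //; by rewrite mulgKV.
case=> b1 [b2 [h1 h2 ->]]; apply: mem_mulg => //; by rewrite mem_rcoset mulgK.
Qed.

Lemma dc_mem b1 x b2 : b1 \in B -> b2 \in B -> b1 * x * b2 \in dc x.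
Proof. by move=> h1 h2; apply/dcP; exists b1, b2. Qed.

Lemma dc_refl x : x \in dc x.
Proof. by have := @dc_mem 1 x 1 (group1 _) (group1 _); rewrite mulg1 mul1g. Qed.

Lemma dc_sym x z : z \in dc x -> x \in dc z.
Proof.
case/dcP => b1 [b2 [h1 h2 ->]]; apply/dcP; exists b1^-1, b2^-1; split; rewrite ?groupV //.
by rewrite !mulgA mulVg mul1g mulgK.
Qed.

Lemma dc_trans x y z : y \in dc x -> z \in dc y -> z \in dc x.
Proof.
case/dcP => b1 [b2 [h1 h2 ->]]; case/dcP => b3 [b4 [h3 h4 ->]].
rewrite !mulgA -(mulgA _ b2); apply: dc_mem; rewrite ?groupM //.
Qed.

Lemma dc_lmul b x z : b \in B -> z \in dc x -> b * z \in dc x.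
Proof. move=> hb; case/dcP => b1 [b2 [h1 h2 ->]]; rewrite !mulgA; apply: dc_mem => //; exact: groupM. Qed.
Lemma dc_rmul b x z : b \in B -> z \in dc x -> z * b \in dc x.
Proof. move=> hb; case/dcP => b1 [b2 [h1 h2 ->]]; rewrite -mulgA; apply: dc_mem => //; exact: groupM. Qed.

Lemma BN4e s b n : s \in S -> b \in B -> n \in N ->
  s * b * n \in dc n \/ s * b * n \in dc (s * n).
Proof.
move=> hs hb hn.
have : s * b * n \in s *: B :* n.
  by rewrite mem_rcoset mulgK mem_lcoset mulKg.
move/(subsetP (hBN4 hs hn)); rewrite inE; case/orP; by [left | right].
Qed.

Lemma sinv s : s \in S -> s^-1 = s * (s * s)^-1.
Proof. by move=> _; rewrite invMg mulgA mulgV mul1g. Qed.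

Lemma sinvT s : s \in S -> (s * s)^-1 \in T.
Proof. by move=> hs; rewrite groupV; case: (hS hs). Qed.

Lemma dc_inv x z : z \in dc x -> z^-1 \in dc x^-1.
Proof.
case/dcP => b1 [b2 [h1 h2 ->]]; rewrite !invMg mulgA; apply: dc_mem; by rewrite groupV.
Qed.

Lemma BN4r w b t : t \in S -> b \in B -> w \in N ->
  w * b * t \in dc w \/ w * b * t \in dc (w * t).
Proof.
move=> ht hb hw.
have htN := memSN ht.
have hBt : t * t \in B by apply: memTB; case: (hS ht).
have e : w * b * t = w * b * t^-1 * (t * t) by rewrite -[in RHS]mulgA mulKg.
have h2 : w * t^-1 \in dc (w * t).
  have -> : w * t^-1 = w * t * (t * t)^-1 by rewrite invMg -[in RHS]mulgA mulKVg.
  by apply: dc_rmul; rewrite ?groupV // dc_refl.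
rewrite e; case: (BN4e ht (groupVr hb) (groupVr hw)) => h; [left | right]; move/dc_inv: h;
  rewrite !invMg !invgK => h; apply: dc_rmul => //.
  by rewrite -mulgA.
by apply: dc_trans h2 _; rewrite -mulgA.
Qed.

Lemma gen_closure (A Z : {set gT}) :
  (forall a z, a \in A -> z \in Z -> a * z \in Z) ->
  forall x z, x \in <<A>> -> z \in Z -> x * z \in Z.
Proof.
move=> hA x z /gen_prodgP [n [c hc ->]]; elim: n c hc z => [|n IH] c hc z hz.
  by rewrite big_ord0 mul1g.
rewrite big_ord_recl -mulgA; apply: hA => //; exact: IH.
Qed.

Lemma G_sub : G \subset <<S :|: B>>.
Proof.
rewrite hG gen_subG; apply/subsetP => x; rewrite inE; case/orP => hx.
  by apply: mem_gen; rewrite inE hx orbT.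
move: hx; rewrite hNgen; apply/subsetP; apply: genS; apply: setUS; exact: TB.
Qed.

Lemma bruhat g : g \in G -> exists2 n, n \in N & g \in dc n.
Proof.
move=> hg.
pose Z := [set z | [exists n in N, z \in dc n]].
have hZ : forall a z, a \in S :|: B -> z \in Z -> a * z \in Z.
  move=> a z ha; rewrite !inE => /existsP [n /andP [hn hz]].
  move: ha; rewrite inE; case/orP => ha.
    case/dcP: hz => b1 [b2 [h1 h2 ->]]; rewrite !mulgA.
    case: (BN4e ha h1 hn) => h.
      by apply/existsP; exists n; rewrite hn; apply: dc_rmul.
    apply/existsP; exists (a * n); apply/andP; split; [by rewrite groupM // memSN | exact: dc_rmul].
  by apply/existsP; exists n; rewrite hn dc_lmul.
have : g * 1 \in Z.
  apply: (gen_closure hZ); first exact: (subsetP G_sub).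
  by rewrite inE; apply/existsP; exists 1; rewrite group1 dc_refl.
by rewrite mulg1 inE => /existsP [n /andP [hn h]]; exists n.
Qed.

Fixpoint Lk k : {set gT} := if k is k'.+1 then Lk k' :|: S * Lk k' else T.

Lemma Lk_S k x s : s \in S -> x \in Lk k -> s * x \in Lk k.+1.
Proof. by move=> hs hx; rewrite /= inE mem_mulg ?orbT. Qed.

Lemma Lk_sub k : Lk k \subset Lk k.+1.
Proof. exact: subsetUl. Qed.

Lemma Lk_mono j k : j <= k -> Lk j \subset Lk k.
Proof.
move=> /subnK <-; elim: (k - j) => [|d IH] //=; apply: subset_trans IH _; exact: Lk_sub.
Qed.

Lemma Lk_N k : Lk k \subset N.
Proof.
elim: k => [|k IH] /=; first exact: TN.
rewrite subUset IH /=; apply/subsetP => x /mulsP [s [y [hs hy ->]]].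
by apply: groupM; [exact: memSN | exact: (subsetP IH)].
Qed.

Lemma memLkN k x : x \in Lk k -> x \in N. Proof. exact: (subsetP (Lk_N k)). Qed.

Lemma Lk_T k x t : x \in Lk k -> t \in T -> x * t \in Lk k.
Proof.
elim: k x => [|k IH] x /=; first by move=> hx ht; rewrite groupM.
rewrite inE; case/orP => [hx ht|/mulsP [s [y [hs hy ->]]] ht].
  by rewrite inE IH.
by rewrite -mulgA Lk_S // IH.
Qed.

Lemma T_Lk k x t : x \in Lk k -> t \in T -> t * x \in Lk k.
Proof.
elim: k x t => [|k IH] x t /=; first by move=> hx ht; rewrite groupM.
rewrite inE; case/orP => [hx ht|/mulsP [s [y [hs hy ->]]] ht].
  by rewrite inE IH.
have -> : t * (s * y) = s * (t ^ s * y) by rewrite !mulgA mulgV mul1g.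
apply: Lk_S => //; apply: IH => //; apply: TJ => //; exact: memSN.
Qed.

Lemma Lk_Sr k x s : s \in S -> x \in Lk k -> x * s \in Lk k.+1.
Proof.
move=> hs; elim: k x => [|k IH] x /=.
  move=> hx; rewrite conjgC inE; apply/orP; right; apply: mem_mulg => //.
  by apply: TJ => //; apply: memSN.
rewrite inE; case/orP => [hx|/mulsP [s' [y [hs' hy ->]]]].
  by rewrite inE IH.
have e : s' * y * s = s' * (y * s) by rewrite mulgA.
by rewrite e inE; apply/orP; right; apply: mem_mulg => //; apply: IH.
Qed.

Lemma Lk_dec_r k x : x \in Lk k.+1 ->
  x \in Lk k \/ exists y : gT, exists t : gT, [/\ y \in Lk k, t \in S & x = y * t].
Proof.
elim: k x => [|k IH] x.
  rewrite /= inE; case/orP => [hx|/mulsP [s [y [hs hy ->]]]]; first by left.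
  right; exists (y ^ s^-1), s; split => //.
    by apply: TJ => //; rewrite groupV memSN.
  by rewrite -conjgCV.
rewrite [Lk k.+2]/= inE; case/orP => [hx|/mulsP [s [y [hs hy ->]]]]; first by left.
case: (IH y hy) => [hy'|[y' [t [hy' ht ->]]]].
  by left; apply: Lk_S.
by right; exists (s * y'), t; split; rewrite ?mulgA // Lk_S.
Qed.

Lemma Lk_mul j k x y : x \in Lk j -> y \in Lk k -> x * y \in Lk (j + k).
Proof.
elim: j x => [|j IH] x; first by move=> /= hx hy; rewrite add0n T_Lk.
rewrite [Lk j.+1]/= inE; case/orP => [hx|/mulsP [s [x' [hs hx' ->]]]] hy.
  by rewrite addSn; apply: (subsetP (Lk_sub _)); apply: IH.
have e : s * x' * y = s * (x' * y) by rewrite mulgA.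
by rewrite addSn e Lk_S // IH.
Qed.

Lemma N_Lk n : n \in N -> exists k, n \in Lk k.
Proof.
rewrite hNgen => /gen_prodgP [m [c hc ->]].
elim: m c hc => [|m IH] c hc; first by exists 0; rewrite big_ord0 /= group1.
rewrite big_ord_recl; case: (IH (fun i => c (lift ord0 i))) => [i|k hk].
  exact: hc.
move: (hc ord0); rewrite inE; case/orP => h.
  by exists k.+1; apply: Lk_S.
by exists k; apply: T_Lk.
Qed.

Lemma notS_T s : s \in S -> s \notin T. Proof. by case/hS. Qed.

Lemma Lk_dec_l k x : x \in Lk k.+1 ->
  x \in Lk k \/ exists s : gT, exists y : gT, [/\ s \in S, y \in Lk k & x = s * y].
Proof.
rewrite [Lk k.+1]/= inE; case/orP => [h|/mulsP [s [y [hs hy ->]]]]; first by left.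
by right; exists s, y.
Qed.

(* Bruhat uniqueness *)
Lemma BU k x y : x \in Lk k -> y \in N -> x \in dc y -> x^-1 * y \in T.
Proof.
elim: k x y => [|k IH] x y.
  move=> /= hx hy hxy; have hxB := memTB hx.
  have : y \in dc x by apply: dc_sym.
  case/dcP => b1 [b2 [h1 h2 ey]].
  have hyB : y \in B by rewrite ey !groupM.
  by rewrite groupM ?groupV // memBT.
move=> hx hy hxy; case: (Lk_dec_l hx) => [hx'|[s [x' [hs hx' ex]]]].
  exact: IH.
have hsN := memSN hs; have hx'N := memLkN hx'; have hxN := memLkN hx.
have hu := sinvT hs; have huB := memTB hu.
have hx'2 : x' \in dc y \/ x' \in dc (s * y).
  case/dcP: hxy => b1 [b2 [h1 h2 e]].
  have ex' : x' = s^-1 * x by rewrite ex mulKg.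
  have -> : x' = s * ((s * s)^-1 * b1) * y * b2 by rewrite ex' e (sinv hs) !mulgA.
  case: (BN4e hs (groupM huB h1) hy) => h; [left|right]; exact: dc_rmul.
case: hx'2 => h.
  have h3 : x' \in dc x by apply: dc_trans (dc_sym hxy) h.
  have := IH x' x hx' hxN h3.
  move=> hsx; have : s \in T.
    have := TJ hsx (groupVr hx'N).
    by rewrite ex /conjg invgK !mulgA mulgV mul1g mulgK.
  by rewrite (negPf (notS_T hs)).
have := IH x' (s * y) hx' (groupM hsN hy) h => h4.
have e : x^-1 * y = ((s * s)^-1 ^ x') * (x'^-1 * (s * y)).
  rewrite ex /conjg !mulgA mulgK invMg invMg !mulgA mulgKV //.
rewrite e groupM //; exact: TJ.
Qed.


Lemma L3 k m s : m \in Lk k -> s \in S -> s * m \notin Lk k ->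
  forall b, b \in B -> s * b * m \in dc (s * m).
Proof.
elim: k m => [|k IH] m.
  move=> /= hm hs _ b hb.
  have := @dc_mem 1 (s * m) (b ^ m) (group1 _) (groupJ hb (memTB hm)).
  by rewrite mul1g /conjg !mulgA mulgK.
move=> hm hs hsm b hb.
case: (Lk_dec_r hm) => [hm'|[m' [t [hm' ht em]]]].
  apply: IH => //; apply: contra hsm; apply/subsetP; exact: Lk_sub.
have hsm' : s * m' \notin Lk k.
  apply: contra hsm => h; rewrite em mulgA; exact: Lk_Sr.
have hsN := memSN hs; have hm'N := memLkN hm'; have hmN := memLkN hm.
case/dcP: (IH m' hm' hs hsm' b hb) => b1 [b2 [h1 h2 e1]].
have e2 : s * b * m = b1 * (s * m' * b2 * t) by rewrite em !mulgA e1 !mulgA.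
case: (BN4r ht h2 (groupM hsN hm'N)) => h.
  case: (BN4e hs hb hmN) => h'; last by [].
  have hz : s * b * m \in dc (s * m') by rewrite e2; apply: dc_lmul.
  have hmm : m \in dc (s * m') by apply: dc_trans hz (dc_sym h').
  have ht0 := BU hm (groupM hsN hm'N) hmm.
  have : s * m \in Lk k.+1.
    have -> : s * m = (s * s) * (m' * (m^-1 * (s * m'))^-1).
      by rewrite em !invMg !invgK !mulgA !mulgK.
    apply: (subsetP (Lk_sub _)); apply: T_Lk; last by case: (hS hs).
    apply: Lk_T => //; by rewrite groupV.
  by rewrite (negPf hsm).
by rewrite e2; apply: dc_lmul => //; rewrite em mulgA.
Qed.

Lemma s_in_dcs s : s \in S -> s^-1 \in dc s.
Proof. move=> hs; rewrite (sinv hs); apply: dc_rmul; [exact: memTB (sinvT hs) | exact: dc_refl]. Qed.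

Lemma dcs_inv s u : s \in S -> u \in dc s -> u^-1 \in dc s.
Proof. move=> hs hu; apply: dc_trans (s_in_dcs hs) (dc_inv hu). Qed.

Lemma dcss s u v : s \in S -> u \in dc s -> v \in dc s -> u * v \in B \/ u * v \in dc s.
Proof.
move=> hs /dcP [b1 [b2 [h1 h2 ->]]] /dcP [b3 [b4 [h3 h4 ->]]].
have -> : b1 * s * b2 * (b3 * s * b4) = b1 * (s * (b2 * b3) * s) * b4 by rewrite !mulgA.
case: (BN4e hs (groupM h2 h3) (memSN hs)) => h.
  by right; apply: dc_rmul => //; apply: dc_lmul.
left; case/dcP: h => c1 [c2 [hc1 hc2 ->]].
have hss : s * s \in B by apply: memTB; case: (hS hs).
apply: groupM => //; apply: groupM => //; apply: groupM => //; exact: groupM.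
Qed.

Lemma CL (X : {set gT}) s (q : nat) : s \in S ->
  (forall b x, b \in B -> x \in X -> b * x \in X) ->
  (forall z, z \in dc s * X -> z \notin X) ->
  q * #|B| <= #|dc s| ->
  q * #|X| <= #|dc s * X|.
Proof.
move=> hs hX hdis hq.
pose E := setX (dc s) X.
have hE : #|E| <= #|dc s * X| * #|B|.
  apply: (@fiber_le _ _ E (dc s * X) (fun p : gT * gT => (p.1 * p.2 : gT))).
    by move=> p; rewrite inE => /andP [h1 h2]; apply: mem_mulg.
  move=> z hz.
  pose F := [set p : gT * gT in E | p.1 * p.2 == z].
  change (#|F| <= #|B|).
  case: (set_0Vmem F) => [->|[p0 hp0]]; first by rewrite cards0.
  move: (hp0); rewrite !inE => /andP [/andP [hu0 hx0] /eqP ez0].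
  have hinj : {in F &, injective (fun p : gT * gT => p.2)}.
    move=> [u x] [u' x']; rewrite !inE /= => /andP [_ /eqP e1] /andP [_ /eqP e2] ex.
    by subst x'; congr pair; apply: (mulIg x); rewrite e1 e2.
  rewrite -(card_in_imset hinj) -(card_rcoset B p0.2).
  apply: subset_leq_card; apply/subsetP => x /imsetP [[u x1] hp ->] /=.
  move: hp; rewrite !inE /= => /andP [/andP [hu hx1] /eqP e].
  have ex1 : x1 = u^-1 * p0.1 * p0.2 by rewrite -mulgA ez0 -e mulKg.
  have hv : u^-1 * p0.1 \in dc s -> False.
    move=> hv; have : x1 \in dc s * X.
      rewrite ex1; exact: mem_mulg.
    by move/hdis; rewrite hx1.
  case: (dcss hs (dcs_inv hs hu) hu0) => h; last by case: (hv h).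
  by rewrite mem_rcoset ex1 mulgK.
have hB : 0 < #|B| by rewrite cardG_gt0.
rewrite -(leq_pmul2r hB); apply: leq_trans hE.
by rewrite cardsX mulnAC; apply: leq_mul.
Qed.

Lemma dgP (H K : {set gT}) x z :
  reflect (exists h : gT, exists k : gT, [/\ h \in H, k \in K & z = h * x * k]) (z \in H :* x * K).
Proof.
apply: (iffP idP).
  case/mulsP => y [k [hy hk ->]]; move: hy; rewrite mem_rcoset => hy.
  exists (y * x^-1), k; split => //; by rewrite mulgKV.
case=> h [k [h1 h2 ->]]; apply: mem_mulg => //; by rewrite mem_rcoset mulgK.
Qed.

Lemma dg_mem (H K : {set gT}) h x k : h \in H -> k \in K -> h * x * k \in H :* x * K.
Proof. by move=> h1 h2; apply/dgP; exists h, k. Qed.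

Lemma KB (q : nat) (P : {group gT}) a :
  BN_params_ge B S q -> B \subset P -> a \in G -> a \notin P ->
  q * #|P| <= #|B :* a * P|.
Proof.
move=> hq hBP ha haP.
have hBPe := subsetP hBP.
set D := B :* a * P.
have hD : forall b x p, b \in B -> p \in P -> x \in D -> b * x * p \in D.
  move=> b x p hb hp /dgP [b' [p' [hb' hp' ->]]].
  have -> : b * (b' * a * p') * p = (b * b') * a * (p' * p) by rewrite !mulgA.
  by apply: dg_mem; apply: groupM.
pose Q k := [exists x in N, (x \in Lk k) && (x \in D)].
have hex : exists k, Q k.
  case: (bruhat ha) => n hn han.
  case: (N_Lk hn) => k hk; exists k; apply/existsP; exists n; rewrite hn hk /=.
  case/dcP: (dc_sym han) => b1 [b2 [h1 h2 ->]].
  by apply: dg_mem => //; apply: (hBPe).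
case: (ex_minnP hex) => k /existsP [x /andP [hxN /andP [hxk hxD]]] hmin.
case: k hxk hmin => [|k] hxk hmin.
  case/dgP: hxD => b [p [hb hp ex]].
  have : a = b^-1 * x * p^-1 by rewrite ex !mulgA mulVg mul1g mulgK.
  move=> ea; move: haP; rewrite ea; rewrite !groupM ?groupV //.
  - exact: hBPe.
  - by apply: (hBPe); apply: memTB.
have hQ : forall y, y \in N -> y \in Lk k -> y \in D -> False.
  move=> y hy hyk hyD; have : Q k by apply/existsP; exists y; rewrite hy hyk.
  by move/hmin; rewrite ltnn.
case: (Lk_dec_l hxk) => [hx'|[s [m [hs hm ex]]]].
  by case: (hQ x hxN hx' hxD).
have hmN := memLkN hm.
have hsm : s * m \notin Lk k by apply/negP; rewrite -ex => h; exact: (hQ x hxN h hxD).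
have L := L3 hm hs hsm.
set X := B :* m * P.
have h1 : forall b y, b \in B -> y \in X -> b * y \in X.
  move=> b y hb /dgP [b' [p' [hb' hp' ->]]]; rewrite !mulgA; apply: dg_mem => //; exact: groupM.
have h2 : dc s * X \subset D.
  apply/subsetP => z /mulsP [u [y [hu hy ->]]].
  case/dcP: hu => b1 [b2 [hb1 hb2 ->]]; case/dgP: hy => b3 [p3 [hb3 hp3 ->]].
  have -> : b1 * s * b2 * (b3 * m * p3) = b1 * (s * (b2 * b3) * m) * p3 by rewrite !mulgA.
  apply: (hD) => //; have := L _ (groupM hb2 hb3); rewrite -ex => /dcP [c1 [c2 [hc1 hc2 ->]]].
  apply: (hD) => //; exact: hBPe.
have h3 : forall z, z \in dc s * X -> z \notin X.
  move=> z hz; apply/negP => hzX.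
  have hzD := subsetP h2 z hz.
  case/dgP: hzX => b [p [hb hp ez]].
  apply: (hQ m hmN hm).
  have -> : m = b^-1 * z * p^-1 by rewrite ez !mulgA mulVg mul1g mulgK.
  apply: (hD) => //; by rewrite groupV.
have := CL hs h1 h3 (hq s hs).
move=> hc; apply: leq_trans (leq_trans hc (subset_leq_card h2)).
rewrite leq_mul2l; apply/orP; right.
rewrite -(card_lcoset P m); apply: subset_leq_card; apply/subsetP => y.
rewrite mem_lcoset => hy; have := @dg_mem B P 1 m (m^-1 * y) (group1 _) hy.
by rewrite mul1g mulKVg.
Qed.

Lemma K0 (q : nat) (P : {group gT}) w :
  BN_params_ge B S q -> B \subset P -> w \in G -> w \notin P ->
  q * #|w *: P :&: P :* w| <= #|P|.
Proof.
move=> hq hBP hw hwP.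
set I := w *: P :&: P :* w.
have h1 : q * #|P| <= #|P :* w * P|.
  apply: leq_trans (KB hq hBP hw hwP) _; apply: subset_leq_card.
  apply: mulSg; apply/subsetP => x; rewrite !mem_rcoset; exact: (subsetP hBP).
have h2 : #|P :* w * P| * #|I| <= #|setX P P|.
  rewrite (@fiber_sum _ _ (setX P P) (P :* w * P) (fun p : gT * gT => (p.1 * w * p.2 : gT))).
    rewrite -sum_nat_const; apply: leq_sum => z /dgP [p0 [p0' [hp0 hp0' ez]]].
    pose F := [set p : gT * gT in setX P P | p.1 * w * p.2 == z].
    change (#|I| <= #|F|).
    pose h := fun c : gT => (p0 * c * w^-1, c^-1 * w * p0').
    have hinj : injective h.
      by move=> c c' [] /mulIg /mulgI.
    rewrite -(card_imset _ hinj); apply: subset_leq_card; apply/subsetP => y.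
    case/imsetP => c; rewrite inE mem_lcoset mem_rcoset => /andP [hc1 hc2] ->.
    rewrite !inE /= -andbA; apply/and3P; split.
    - by rewrite -mulgA groupM.
    - have -> : c^-1 * w * p0' = (w^-1 * c)^-1 * p0' by rewrite invMg invgK.
      by rewrite groupM ?groupV.
    - by apply/eqP; rewrite ez !mulgA mulgKV mulgK.
  by move=> p; rewrite inE => /andP [h3 h4]; apply: dg_mem.
have hP : 0 < #|P| by rewrite cardG_gt0.
rewrite -(leq_pmul2l hP) mulnA (mulnC #|P|).
apply: leq_trans (leq_mul h1 (leqnn _)) _.
by apply: leq_trans h2 _; rewrite cardsX.
Qed.

Lemma Kpar (q : nat) (P : {group gT}) w :
  BN_params_ge B S q -> parabolic G B P -> w \in G -> w \notin P ->
  q * #|w *: P :&: P :* w| <= #|P|.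
Proof.
move=> hq [hPG [g hg hBg]] hw hwP.
have hB0 : B \subset (P :^ g^-1)%G by rewrite /= -sub_conjg.
have hw0 : w ^ g^-1 \in G by rewrite groupJ ?groupV.
have hwP0 : w ^ g^-1 \notin (P :^ g^-1)%G by rewrite /= memJ_conjg.
have := K0 hq hB0 hw0 hwP0; rewrite /= cardJg.
apply: leq_trans; rewrite leq_mul2l; apply/orP; right.
rewrite -(card_imset _ (@conjg_inj _ g^-1)); apply: subset_leq_card.
apply/subsetP => y /imsetP [x]; rewrite !inE mem_lcoset mem_rcoset => /andP [h1 h2] ->.
by rewrite mem_lcoset mem_rcoset -!conjVg -!conjMg !memJ_conjg h1 h2.
Qed.

Lemma claim4 (q : nat) (J : {set gT}) (P : {group gT}) (A : {set gT}) :
  BN_params_ge B S q -> P :=: PJ B N J -> A \subset G -> ~~ (A \subset P) ->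
  (q * #|P| <= #|(P * A * B)%g|)%N.
Proof.
move=> hq hPJ hAG /subsetPn [a ha haP].
have haG := subsetP hAG a ha.
have hBP : B \subset P.
  rewrite hPJ; apply/subsetP => b hb.
  have := mem_mulg (mem_mulg hb (group1 <<J :|: (B :&: N)>>%G)) (group1 B).
  by rewrite !mulg1.
have hai : a^-1 \notin P by rewrite groupV.
apply: leq_trans (KB hq hBP (groupVr haG) hai) _.
rewrite -(card_imset _ (@invg_inj gT)); apply: subset_leq_card.
apply/subsetP => y /imsetP [z /dgP [b [p [hb hp ->]]] ->].
rewrite !invMg invgK mulgA; apply: mem_mulg; last by rewrite groupV.
by apply: mem_mulg; rewrite ?groupV.
Qed.
End BN.

Section Real.
Import Order.TTheory.
Lemma real2 (R : rcfType) (a p q ap pa i : nat) : (0 < a)%N ->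
  (a ^ 2 <= 2 * (ap * i) \/ a * p * q <= 4 * (ap * pa))%N ->
  (2%:R^-1 * (if i == 0%N then Num.sqrt (a%:R * p%:R * q%:R)
              else Num.min (a%:R ^+ 2 / i%:R) (Num.sqrt (a%:R * p%:R * q%:R)))
     <= Num.max ap%:R pa%:R :> R)%R.
Proof.
move=> ha h.
set s := Num.sqrt _.
set m := Num.max _ _.
have hs0 : (0 <= s)%R by apply: sqrtr_ge0.
have hap : (ap%:R <= m :> R)%R by rewrite le_max lexx.
have hpa : (pa%:R <= m :> R)%R by rewrite le_max lexx orbT.
have hap0 : (0 <= ap%:R :> R)%R by apply: ler0n.
have hpa0 : (0 <= pa%:R :> R)%R by apply: ler0n.
have key : (a * p * q <= 4 * (ap * pa))%N -> (2%:R^-1 * s <= m)%R.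
  move=> h2.
  have h3 : (s ^+ 2 <= 4%:R * (ap%:R * pa%:R) :> R)%R.
    rewrite sqr_sqrtr; last by rewrite -!natrM ler0n.
    by rewrite -!natrM ler_nat.
  have h4 : (s <= 2%:R * m)%R.
    rewrite -(ler_pXn2r (isT : (0 < 2)%N)) ?nnegrE //; last by nra.
    by nra.
  by nra.
case: h => [h1|h2].
  have hi : (0 < i)%N.
    case: (posnP i) => // i0; move: h1; rewrite i0 muln0 leqn0 expn_eq0.
    by move/andP => [/eqP a0 _]; move: ha; rewrite a0.
  have hi' : (i == 0%N) = false by move: hi; rewrite lt0n; move/negPf.
  rewrite hi'.
  have h5 : (a%:R ^+ 2 / i%:R <= 2%:R * ap%:R :> R)%R.
    rewrite ler_pdivrMr ?ltr0n // -natrX -!natrM ler_nat; by rewrite mulnA in h1.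
  have h6 : (Num.min (a%:R ^+ 2 / i%:R) s <= a%:R ^+ 2 / i%:R :> R)%R by rewrite ge_min lexx.
  by nra.
have := key h2; case: (i == 0%N) => // h7.
have h6 : (Num.min (a%:R ^+ 2 / i%:R) s <= s :> R)%R by rewrite ge_min lexx orbT.
by nra.
Qed.

Lemma real3 (R : rcfType) (pp q a E1 E2 apa : nat) : (0 < E1)%N -> (0 < E2)%N ->
  (q * a ^ 4 * pp <= apa * (q * (E1 * E2) + a ^ 4))%N ->
  (pp%:R / 4%:R * Num.min q%:R (a%:R ^+ 4 / E1%:R / E2%:R) <= apa%:R :> R)%R.
Proof.
move=> h1 h2 h.
have hpp : (0 <= pp%:R / 4%:R :> R)%R by rewrite divr_ge0 ?ler0n.
case: (leqP (a ^ 4) (q * (E1 * E2))) => hc.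
  have hn : (pp * a ^ 4 <= 4 * apa * (E1 * E2))%N.
    case: (posnP q) => [q0|qp].
      by move: hc; rewrite q0 mul0n leqn0 => /eqP ->; rewrite muln0.
    rewrite -(leq_pmul2l qp); apply: leq_trans (_ : (q * a ^ 4 * pp <= _)%N); first by rewrite eq_leq //; ring.
    apply: leq_trans h _.
    have : (apa * (q * (E1 * E2) + a ^ 4) <= apa * (2 * (q * (E1 * E2))))%N.
      by rewrite leq_mul2l mul2n -addnn leq_add2l hc orbT.
    move/leq_trans; apply; nia.
  apply: le_trans (_ : (_ <= pp%:R / 4%:R * (a%:R ^+ 4 / E1%:R / E2%:R))%R) _.
    by apply: ler_wpM2l => //; rewrite ge_min lexx orbT.
  have -> : (pp%:R / 4%:R * (a%:R ^+ 4 / E1%:R / E2%:R) = (pp * a ^ 4)%:R / (4 * E1 * E2)%:R :> R)%R.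
    rewrite !natrM; field.
    by rewrite !pnatr_eq0 -!lt0n h1 h2.
  rewrite ler_pdivrMr ?ltr0n ?muln_gt0 ?h1 ?h2 // -natrM ler_nat.
  by apply: leq_trans hn _; rewrite eq_leq //; ring.
have hn : (q * pp <= 2 * apa)%N.
  have ha : (0 < a ^ 4)%N by apply: leq_ltn_trans hc.
  rewrite -(leq_pmul2r ha); apply: leq_trans (_ : (q * a ^ 4 * pp <= _)%N); first by rewrite eq_leq //; ring.
  apply: leq_trans h _.
  have : (apa * (q * (E1 * E2) + a ^ 4) <= apa * (2 * a ^ 4))%N.
    by rewrite leq_mul2l mul2n -addnn leq_add2r (ltnW hc) orbT.
  move/leq_trans; apply; rewrite eq_leq //; ring.
apply: le_trans (_ : (_ <= pp%:R / 4%:R * q%:R)%R) _.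
  by apply: ler_wpM2l => //; rewrite ge_min lexx.
have hn' : ((q * pp)%:R <= (2 * apa)%:R :> R)%R by rewrite ler_nat.
rewrite !natrM in hn'; rewrite mulrAC ler_pdivrMr ?ltr0n //; have := ler0n R apa; nra.
Qed.

End Real.

Theorem theorem12 (gT : finGroupType) (G B N : {group gT}) (S : {set gT}) (q : nat)
    (R : rcfType) :
  is_BN_pair G B N S -> BN_params_ge B S q ->
  (forall (P : {group gT}) (A : {set gT}),
     parabolic G B P -> P \proper G -> A \subset G -> A != set0 ->
     [/\ (#|A| ^ 2 <= 2 * (#|(A * P)%g| * #|A :&: P|)
            \/ #|A| * #|P| * q <= 4 * (#|(A * P)%g| * #|(P * A)%g|))%N,
         (2%:R^-1 *
            (if #|A :&: P| == 0%N
             then Num.sqrt (#|A|%:R * #|P|%:R * q%:R)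
             else Num.min (#|A|%:R ^+ 2 / #|A :&: P|%:R)
                          (Num.sqrt (#|A|%:R * #|P|%:R * q%:R)))
          <= Num.max #|(A * P)%g|%:R #|(P * A)%g|%:R :> R)%R
       & (#|P|%:R / 4%:R *
            Num.min q%:R (#|A|%:R ^+ 4 / (sigmaS P (A^-1)%g A)%:R
                                      / (sigmaS P A (A^-1)%g)%:R)
          <= #|(A * P * A)%g|%:R :> R)%R]) /\
  (forall (J : {set gT}) (P : {group gT}) (A : {set gT}),
     J \subset S -> P :=: PJ B N J -> A \subset G -> ~~ (A \subset P) ->
     (q * #|P| <= #|(P * A * B)%g|)%N).

Proof.
move=> hBN hq; split.
  move=> P A hpar hprop hAG hA0.
  have hPG : P \subset G by case: hpar.
  have hK : forall w, w \in G -> w \notin P -> (q * #|(w *: P :&: P :* w)%g| <= #|P|)%N.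
    by move=> w hw hwP; apply: (Kpar hBN hq hpar hw hwP).
  have c1 := claim1 hPG hK hAG.
  case: (sigma_pos P hA0) => hs1 hs2.
  split.
  - exact: c1.
  - by apply: real2 => //; rewrite card_gt0.
  - by apply: real3 => //; apply: (claim3_nat hPG hK hAG).
move=> J P A hJ hPJ hAG hAP.
exact: (claim4 hBN hq hPJ hAG hAP).
Qed.
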